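(* There exists a linear operator $T:\mathbb{R}[x]\to\mathbb{R}[x]$ which is an infinite order differential operator and a hyperbolicity preserver, but which is not monotone.
   Context: $D=\frac{d}{dx}$. Every linear operator $T:\mathbb{R}[x]\to\mathbb{R}[x]$ can be written uniquely as $T=\sum_{k=0}^\infty Q_k(x)D^k$ with $Q_k\in\mathbb{R}[x]$ (meaning $T[p]=\sum_kQ_kD^k[p]$ for all polynomials $p$). $T$ is an infinite order differential operator if $Q_k\not\equiv0$ for infinitely many $k$. $T$ is a hyperbolicity preserver if $T[p]$ has only real zeros whenever $p$ has only real zeros. $T$ is monotone if the degrees of its nonzero coefficient polynomials are nondecreasing, i.e. $\deg Q_k\le\deg Q_l$ whenever $k<l$ and $Q_k\not\equiv0$, $Q_l\not\equiv0$. *)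

(* Defs.v *)
From HB Require Import structures.
From mathcomp Require Import all_boot all_order all_algebra.
Set Implicit Arguments. Unset Strict Implicit. Unset Printing Implicit Defensive.
Import Order.TTheory GRing.Theory Num.Theory.
Local Open Scope ring_scope.

Section Defs.
Variable R : rcfType.

(* p has only real zeros: p factors into linear factors over R
   (over a real closed field R, the zeros of p in R[i] are all in R iff this holds).
   The zero polynomial is counted (lead_coef 0 = 0). *)
Definition only_real_zeros (p : {poly R}) : Prop :=
  exists rs : seq R, p = lead_coef p *: \prod_(r <- rs) ('X - r%:P).

Definition lin_op (T : {poly R} -> {poly R}) : Prop :=
  forall (a : R) (p q : {poly R}), T (a *: p + q) = a *: T p + T q.

(* T = sum_k Q_k(x) D^k  (the sum is finite on each polynomial since D^k p = 0 for k >= size p) *)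
Definition diff_rep (T : {poly R} -> {poly R}) (Q : nat -> {poly R}) : Prop :=
  forall p : {poly R}, T p = \sum_(k < size p) Q k * p^`(k).

Definition infinite_order_coeffs (Q : nat -> {poly R}) : Prop :=
  forall N : nat, exists k : nat, (N <= k)%N /\ Q k != 0.

Definition hyperbolicity_preserver (T : {poly R} -> {poly R}) : Prop :=
  forall p : {poly R}, only_real_zeros p -> only_real_zeros (T p).

(* monotone: deg Q_k <= deg Q_l whenever k < l and both nonzero
   (for nonzero polynomials deg comparison = size comparison) *)
Definition monotone_coeffs (Q : nat -> {poly R}) : Prop :=
  forall k l : nat, (k < l)%N -> Q k != 0 -> Q l != 0 -> (size (Q k) <= size (Q l))%N.

End Defs.

(* Main.v *)
Require Import Defs.
From HB Require Import structures.
From mathcomp Require Import all_boot all_order all_algebra.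
From mathcomp Require Import ring.
Import Order.TTheory GRing.Theory Num.Theory.
Local Open Scope ring_scope.

Section Aux.
Variable R : rcfType.

Lemma evalX_map (q : {poly R}) : (q ^:P).['X] = q.
Proof.
elim/poly_ind: q => [|q c IH]; first by rewrite rmorph0 horner0.
by rewrite rmorphD rmorphM /= map_polyX map_polyC hornerMXaddC IH.
Qed.

Lemma tay (p : {poly R}) n : (size p <= n)%N ->
  (p.[0])%:P = \sum_(i < n) p^`N(i) * (-'X) ^+ i.
Proof.
move=> hn.
have := @nderiv_taylor_wide _ n (p ^:P) 'X (-'X) (mulrC _ _).
rewrite size_map_polyC => /(_ hn); rewrite subrr !horner_coef0 coef_map /= => ->; apply: eq_bigr => i _.
by rewrite nderivn_map evalX_map.
Qed.

Lemma facr_neq0 m : (m`!%:R : R) != 0.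
Proof. by rewrite pnatr_eq0 -lt0n fact_gt0. Qed.

Lemma scale_fact (P p : {poly R}) m :
  (m`!%:R^-1 : R) *: (P * p^`(m)) = P * p^`N(m).
Proof.
rewrite nderivn_def mulrnAr -scaler_nat scalerA mulVf ?facr_neq0 //.
by rewrite scale1r.
Qed.

Definition Tm (p : {poly R}) : {poly R} :=
  'X * ((p^`()).[0])%:P + (p.[0] *+ 2)%:P + ((p^`(2)).[0])%:P.

Definition c1 (m : nat) : {poly R} :=
  if m is k.+1 then (k`!%:R^-1 : R) *: ('X * (-'X) ^+ k) else 0.
Definition c0 (m : nat) : {poly R} := (m`!%:R^-1 : R) *: ((-'X) ^+ m *+ 2).
Definition c2 (m : nat) : {poly R} :=
  if m is k.+2 then (k`!%:R^-1 : R) *: ((-'X) ^+ k) else 0.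
Definition Qm (m : nat) : {poly R} := c1 m + c0 m + c2 m.

Lemma derivn_big (p : {poly R}) m : (size p <= m)%N -> p^`(m) = 0.
Proof.
move=> h; apply/polyP => i; rewrite coef_derivn coef0 nth_default ?mul0rn //.
by apply: leq_trans h (leq_addr _ _).
Qed.

Lemma sum_wide (F : nat -> {poly R}) (p : {poly R}) n :
  (size p <= n)%N ->
  \sum_(m < size p) F m * p^`(m) = \sum_(m < n) F m * p^`(m).
Proof.
move=> h; rewrite (big_ord_widen n (fun m => F m * p^`(m))) // big_mkcond.
apply: eq_bigr => i _; case: ifP => // /negbT; rewrite -leqNgt => hi.
by rewrite derivn_big ?mulr0.
Qed.

Lemma part0 (p : {poly R}) n : (size p <= n)%N ->
  \sum_(m < n) c0 m * p^`(m) = (p.[0] *+ 2)%:P.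
Proof.
move=> h; rewrite polyCMn (tay _ _ h) -sumrMnl; apply: eq_bigr => i _.
by rewrite /c0 -scalerAl scale_fact mulrC mulrnAr.
Qed.

Lemma size_der (p : {poly R}) n : (size p <= n.+1)%N -> (size p^`() <= n)%N.
Proof.
have [-> | nz] := eqVneq p 0; first by rewrite deriv0 size_poly0.
by move=> h; have := leq_trans (lt_size_deriv nz) h.
Qed.

Lemma part1 (p : {poly R}) n : (size p <= n.+1)%N ->
  \sum_(m < n.+1) c1 m * p^`(m) = 'X * ((p^`()).[0])%:P.
Proof.
move=> h; rewrite big_ord_recl /= mul0r add0r.
have h' : (size p^`() <= n)%N.
  exact: size_der.
rewrite (tay _ _ h') mulr_sumr; apply: eq_bigr => i _.
rewrite /c1 /bump /= !add0n -scalerAl -derivnS derivSn scale_fact; ring.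
Qed.

Lemma part2 (p : {poly R}) n : (size p <= n.+2)%N ->
  \sum_(m < n.+2) c2 m * p^`(m) = ((p^`(2)).[0])%:P.
Proof.
move=> h; rewrite 2!big_ord_recl /= !mul0r !add0r.
have h' : (size p^`(2) <= n)%N.
  by rewrite derivSn derivn1; apply: size_der; apply: size_der.
rewrite (tay _ _ h'); apply: eq_bigr => i _.
by rewrite /c2 /bump /= !add0n -scalerAl -!derivnS !derivSn scale_fact mulrC.
Qed.

Lemma diffrep p : Tm p = \sum_(k < size p) Qm k * p^`(k).
Proof.
have h2 : (size p <= (size p).+2)%N by rewrite ltnW.
rewrite (@sum_wide Qm p (size p).+2 h2) /Qm.
under eq_bigr => i _ do rewrite !mulrDl.
rewrite big_split big_split /=.
rewrite (@part1 p (size p).+1 h2) (@part0 p _ h2) (@part2 p (size p) h2).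
by [].
Qed.

Lemma lin_Tm : lin_op Tm.
Proof.
move=> a p q; rewrite /Tm derivD derivZ !derivnD !derivnZ !hornerD !hornerZ.
rewrite !polyCD !polyCM -mul_polyC; ring.
Qed.

Lemma lin_real (a b : R) : only_real_zeros ('X * a%:P + b%:P).
Proof.
have [-> | nz] := eqVneq a 0.
  exists [::]; rewrite mulr0 add0r big_nil lead_coefC -mul_polyC mulr1 //.
have e : 'X * a%:P + b%:P = a *: ('X - (-(b/a))%:P).
  have hb : b = a * (b / a) by rewrite mulrC divfK.
  rewrite {1}hb polyCM -mul_polyC polyCN; ring.
exists [:: -(b/a)]; rewrite e lead_coefZ lead_coefXsubC mulr1 big_seq1 //.
Qed.

Lemma hyp_Tm : hyperbolicity_preserver Tm.
Proof. by move=> p _; rewrite /Tm -addrA -polyCD; apply: lin_real. Qed.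

Lemma Q1 : Qm 1 = -'X.
Proof.
rewrite /Qm /c1 /c0 /c2 /= factS fact0 !muln1 invr1 !scale1r expr0 mulr1 expr1 mulr2n.
ring.
Qed.

Lemma Q2 : Qm 2 = 1.
Proof.
rewrite /Qm /c1 /c0 /c2 /= !factS fact0 !muln1 invr1 !scale1r expr0 expr1.
rewrite -scaler_nat scalerA mulVf ?pnatr_eq0 // scale1r.
ring.
Qed.

Lemma Qnz k : Qm k.+3 != 0.
Proof.
apply/eqP => /(congr1 (fun q : {poly R} => q`_k.+1)).
rewrite /Qm /c1 /c0 /c2 -(scaleN1r 'X) !exprZn coef0 !coefD !coefZ coefMn !coefZ.
rewrite coefXM /= coefZ !coefXn !eqxx.
rewrite (_ : (k == k.+2) = false); last by elim: k.
rewrite (_ : (k.+1 == k.+3) = false); last by elim: k.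
rewrite !mulr0 mul0rn !add0r !mulr1 => /eqP; apply/negP; rewrite mulr0 add0r.
by rewrite mulf_neq0 ?invr_neq0 ?facr_neq0 ?signr_eq0.
Qed.

End Aux.

Theorem mainTheorem4 (R : rcfType) :
  exists (T : {poly R} -> {poly R}) (Q : nat -> {poly R}),
    [/\ lin_op T, diff_rep T Q, infinite_order_coeffs Q,
        hyperbolicity_preserver T & ~ monotone_coeffs Q].
Proof.
exists (@Tm R), (@Qm R); split.
- exact: lin_Tm.
- exact: diffrep.
- by move=> N; exists N.+3; split; [rewrite leqW // leqW // leqW | exact: Qnz].
- exact: hyp_Tm.
- move=> /(_ 1%N 2%N isT); rewrite Q1 Q2 oppr_eq0 polyX_eq0 oner_eq0.
  by rewrite size_opp size_polyX size_poly1 => /(_ isT isT).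
Qed.
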